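(* Let $(x_n)_n$ be a block sequence in $J$ which is equivalent to the unit vector basis $(e_n)$ of $J$. Then the closed linear span $[x_n]$ is complemented in $J$.
   Context: The James space $J$ is the space of real sequences $x=(x(n))_{n\in\mathbb N}$ with $\|x\|=\sup\big(\sum_{i=1}^m|\sum_{k\in I_i}x(k)|^2\big)^{1/2}<\infty$, the supremum taken over all $m$ and all pairwise disjoint finite intervals $I_1,\dots,I_m$ of $\mathbb N$. The unit vectors $(e_n)$ form a basis of $J$; a block sequence is a sequence of nonzero finitely supported vectors with $\max\operatorname{supp}x_n<\min\operatorname{supp}x_{n+1}$. *)

(* Defs.v *)
From HB Require Import structures.
From mathcomp Require Import all_boot all_order all_algebra.
From mathcomp Require Import classical_sets reals.
Set Implicit Arguments. Unset Strict Implicit. Unset Printing Implicit Defensive.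
Import Order.TTheory GRing.Theory Num.Theory.
Local Open Scope ring_scope.
Local Open Scope classical_set_scope.

Definition rseq (R : realType) := nat -> R.

Definition in_interval (I : nat * nat) (k : nat) : Prop := (I.1 <= k <= I.2)%N.

Definition pairwise_disjoint (Is : seq (nat * nat)) : Prop :=
  forall i j, (i < j < size Is)%N ->
    forall k, ~ (in_interval (nth (0,0)%N Is i) k /\ in_interval (nth (0,0)%N Is j) k).

Definition interval_sum (R : realType) (x : rseq R) (I : nat * nat) : R :=
  \sum_(I.1 <= k < I.2.+1) x k.

Definition jsq (R : realType) (x : rseq R) (Is : seq (nat * nat)) : R :=
  \sum_(I <- Is) (interval_sum x I) ^+ 2.

Definition jsq_set (R : realType) (x : rseq R) : set R :=
  [set r | exists Is, pairwise_disjoint Is /\ r = jsq x Is].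

Definition in_J (R : realType) (x : rseq R) : Prop :=
  exists C : R, forall Is, pairwise_disjoint Is -> jsq x Is <= C.

(* the James norm ||x|| (meaningful for x in J) *)
Definition jnorm (R : realType) (x : rseq R) : R := Num.sqrt (sup (jsq_set x)).

Definition unit_vec (R : realType) (n : nat) : rseq R :=
  fun k => if k == n then 1 else 0.

Definition lincomb (R : realType) (x : nat -> rseq R) (a : nat -> R) (N : nat) : rseq R :=
  fun k => \sum_(n < N) a n * x n k.

Definition finitely_supported (R : realType) (f : rseq R) : Prop :=
  exists N, forall k, (N <= k)%N -> f k = 0.

Definition block_sequence (R : realType) (x : nat -> rseq R) : Prop :=
  (forall n, finitely_supported (x n)) /\
  (forall n, exists k, x n k != 0) /\
  (forall n k l, x n k != 0 -> x n.+1 l != 0 -> (k < l)%N).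

Definition equivalent_seqs (R : realType) (x y : nat -> rseq R) : Prop :=
  exists c C : R, 0 < c /\ 0 < C /\
    forall (a : nat -> R) (N : nat),
      c * jnorm (lincomb y a N) <= jnorm (lincomb x a N) /\
      jnorm (lincomb x a N) <= C * jnorm (lincomb y a N).

Definition closed_span (R : realType) (x : nat -> rseq R) : set (rseq R) :=
  [set y | in_J y /\ forall eps : R, 0 < eps ->
     exists (a : nat -> R) (N : nat), jnorm (fun k => y k - lincomb x a N k) < eps].

Definition complemented_in_J (R : realType) (X : set (rseq R)) : Prop :=
  exists P : rseq R -> rseq R,
    (forall y, in_J y -> in_J (P y)) /\
    (forall (al be : R) y z, in_J y -> in_J z ->
        P (fun k => al * y k + be * z k) = (fun k => al * P y k + be * P z k)) /\
    (exists M : R, forall y, in_J y -> jnorm (P y) <= M * jnorm y) /\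
    (forall y, in_J y -> X (P y)) /\
    (forall y, X y -> P y = y).

(* Main.v *)
Require Import Defs.
From HB Require Import structures.
From mathcomp Require Import all_boot all_order all_algebra.
From mathcomp Require Import boolp classical_sets reals.
From mathcomp Require Import zify ring lra.
Set Implicit Arguments. Unset Strict Implicit. Unset Printing Implicit Defensive.
Import Order.TTheory GRing.Theory Num.Theory.
Local Open Scope ring_scope.
Local Open Scope classical_set_scope.
Definition djb (I J : nat * nat) : bool :=
  [|| (I.2 < J.1)%N, (J.2 < I.1)%N, (I.2 < I.1)%N | (J.2 < J.1)%N].

Lemma djbP I J : djb I J <-> forall k, ~ (in_interval I k /\ in_interval J k).
Proof.
rewrite /djb /in_interval; split.
  move=> h k [/andP [h1 h2] /andP [h3 h4]]; case/or4P: h; lia.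
move=> h; apply/negPn/negP => hn.
apply: (h (maxn I.1 J.1)); rewrite !negb_or in hn; move: hn.
case: I J h => [a b] [c d] /= _; rewrite -!leqNgt => /and4P [h1 h2 h3 h4].
split; apply/andP; split; lia.
Qed.

Lemma pdP Is : pairwise_disjoint Is <-> pairwise djb Is.
Proof.
split.
  move=> h; apply/(pairwiseP (0,0)%N) => i j; rewrite !inE => hi hj hij.
  apply/(proj2 (djbP _ _)); by apply: h; rewrite hij hj.
move=> /(pairwiseP (0,0)%N) h i j /andP [hij hj] k.
apply/(proj1 (djbP _ _)); apply: h => //; rewrite inE; lia.
Qed.

Lemma pd_nil : pairwise_disjoint [::].
Proof. by apply/pdP. Qed.

Lemma jsq_nil (R : realType) (v : rseq R) : jsq v [::] = 0.
Proof. by rewrite /jsq big_nil. Qed.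

Lemma jsq_ge0 (R : realType) (v : rseq R) Is : 0 <= jsq v Is.
Proof. by rewrite /jsq; apply: sumr_ge0 => I _; apply: sqr_ge0. Qed.

Lemma jsq_set_ne (R : realType) (v : rseq R) : jsq_set v !=set0.
Proof. by exists 0; exists [::]; split; [exact: pd_nil | rewrite jsq_nil]. Qed.

Lemma jsq_has_sup (R : realType) (v : rseq R) : in_J v -> has_sup (jsq_set v).
Proof.
move=> [C hC]; split; first exact: jsq_set_ne.
by exists C => r [Is [hIs ->]]; apply: hC.
Qed.

Lemma sup_jsq_ge0 (R : realType) (v : rseq R) : 0 <= sup (jsq_set v).
Proof.
case: (pselect (has_sup (jsq_set v))) => h.
  apply: le_trans (sup_upper_bound h _); first exact: lexx.
  by exists [::]; split; [exact: pd_nil | rewrite jsq_nil].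
by rewrite sup_out.
Qed.

Lemma jnorm_ge0 (R : realType) (v : rseq R) : 0 <= jnorm v.
Proof. exact: sqrtr_ge0. Qed.

Lemma jnorm_sq (R : realType) (v : rseq R) : jnorm v ^+ 2 = sup (jsq_set v).
Proof. by rewrite /jnorm sqr_sqrtr // sup_jsq_ge0. Qed.

Lemma jsq_le_jnorm (R : realType) (v : rseq R) Is :
  in_J v -> pairwise_disjoint Is -> jsq v Is <= jnorm v ^+ 2.
Proof.
move=> hJ hIs; rewrite jnorm_sq; apply: (sup_upper_bound (jsq_has_sup hJ)).
by exists Is.
Qed.

Lemma jnorm_bound (R : realType) (v : rseq R) (B : R) :
  (forall Is, pairwise_disjoint Is -> jsq v Is <= B) ->
  in_J v /\ jnorm v ^+ 2 <= B.
Proof.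
move=> h; split; first by exists B.
rewrite jnorm_sq; apply: ge_sup; first exact: jsq_set_ne.
by move=> r [Is [hIs ->]]; apply: h.
Qed.

Lemma jnorm_le (R : realType) (v : rseq R) (M : R) : 0 <= M ->
  (forall Is, pairwise_disjoint Is -> jsq v Is <= M ^+ 2) -> jnorm v <= M.
Proof.
move=> hM h; have [_ h2] := jnorm_bound h.
rewrite -(ger0_norm hM) -sqrtr_sqr /jnorm ler_sqrt ?sqr_ge0 //.
by rewrite -jnorm_sq.
Qed.

Definition inb (I : nat * nat) (k : nat) : bool := (I.1 <= k <= I.2)%N.

Lemma count_le1 Is k : pairwise djb Is -> (count (fun I => inb I k) Is <= 1)%N.
Proof.
elim: Is => //= I Is IH /andP [hall hp].
case: (boolP (inb I k)) => hI /=; last exact: IH.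
suff -> : count (fun I0 => inb I0 k) Is = 0%N by [].
apply/eqP; rewrite -leqn0 leqNgt -has_count; apply/hasP => [[J hJ hJk]].
have := allP hall J hJ; move/(proj1 (djbP _ _)) => /(_ k); apply.
by split.
Qed.

Lemma isum_cond (R : realType) (v : rseq R) I N : (I.2 < N)%N ->
  interval_sum v I = \sum_(0 <= k < N) (if inb I k then v k else 0).
Proof.
case: I => a b /= hbN; rewrite /interval_sum /inb /=.
case: (leqP a b.+1) => hab.
  rewrite [RHS](@big_cat_nat _ _ _ a) /=; [|lia|lia].
  rewrite [X in _ = _ + X](@big_cat_nat _ _ _ b.+1) //=.
  rewrite [X in _ = X + _]big1_seq ?add0r; last first.
    move=> k; rewrite mem_index_iota => hk; case: ifP => //; lia.
  rewrite [X in _ = _ + X]big1_seq ?addr0; last first.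
    move=> k; rewrite mem_index_iota => hk; case: ifP => //; lia.
  apply: eq_big_seq => k; rewrite mem_index_iota => hk; case: ifP => //; lia.
rewrite big_geq; last lia.
rewrite big1_seq // => k _; case: ifP => //; lia.
Qed.

Lemma interval_sum_lin (R : realType) (u v : rseq R) al be I :
  interval_sum (fun k => al * u k + be * v k) I =
  al * interval_sum u I + be * interval_sum v I.
Proof. by rewrite /interval_sum big_split /= -!mulr_sumr. Qed.

Lemma jsq_add (R : realType) (u v : rseq R) Is :
  jsq (fun k => u k + v k) Is <= 2 * jsq u Is + 2 * jsq v Is.
Proof.
rewrite /jsq !mulr_sumr -big_split /=; apply: ler_sum => I _.
rewrite /interval_sum big_split /=.
set p := \sum_(_ <= _ < _) u _; set q := \sum_(_ <= _ < _) v _.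
have := sqr_ge0 (p - q); lra.
Qed.

Lemma jsq_scale (R : realType) (v : rseq R) c Is :
  jsq (fun k => c * v k) Is = c ^+ 2 * jsq v Is.
Proof.
rewrite /jsq mulr_sumr; apply: eq_bigr => I _.
by rewrite /interval_sum -mulr_sumr exprMn.
Qed.

Lemma jsq_ext (R : realType) (u v : rseq R) Is : (forall k, u k = v k) ->
  jsq u Is = jsq v Is.
Proof.
move=> h; rewrite /jsq; apply: eq_bigr => I _; rewrite /interval_sum.
by congr (_ ^+ 2); apply: eq_bigr.
Qed.


Lemma sum_if_count (R : realType) (T : Type) (s : seq T) (P : pred T) (x : R) :
  \sum_(i <- s) (if P i then x else 0) = x *+ count P s.
Proof.
elim: s => [|a s IH]; first by rewrite big_nil.
by rewrite big_cons IH /=; case: (P a); rewrite ?add0r // mulrS.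
Qed.

Lemma jsq_l1 (R : realType) (v : rseq R) K Is :
  (forall k, (K <= k)%N -> v k = 0) -> pairwise_disjoint Is ->
  jsq v Is <= (\sum_(0 <= k < K) `|v k|) ^+ 2.
Proof.
move=> hv /pdP hIs.
have step1 : jsq v Is <= (\sum_(I <- Is) `|interval_sum v I|) ^+ 2.
  rewrite /jsq; elim: Is {hIs} => [|I Is IH]; first by rewrite !big_nil expr0n.
  rewrite !big_cons; apply: le_trans (lerD (lexx _) IH) _.
  have h1 : 0 <= \sum_(J <- Is) `|interval_sum v J| by apply: sumr_ge0.
  rewrite -[interval_sum v I ^+ 2]real_normK ?num_real //.
  set a := `|_|; set b := \sum_(_ <- _) _.
  have ha : 0 <= a by apply: normr_ge0.
  have hab : 0 <= a * b by apply: mulr_ge0.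
  rewrite sqrrD; lra.
apply: le_trans step1 _; rewrite ler_sqr ?nnegrE ?sumr_ge0 //.
pose N := maxn K (\max_(I <- Is) I.2).+1.
have hK : (K <= N)%N by rewrite leq_maxl.
have e1 : \sum_(I <- Is) `|interval_sum v I| <=
    \sum_(I <- Is) \sum_(0 <= k < N) (if inb I k then `|v k| else 0).
  rewrite big_seq [X in _ <= X]big_seq; apply: ler_sum => I hI.
  rewrite (isum_cond v (N:=N)); last first.
    apply: leq_trans (leq_maxr _ _); rewrite ltnS.
    by apply: (leq_bigmax_seq (F := fun I : nat * nat => I.2)).
  apply: le_trans (ler_norm_sum _ _ _) _; apply: ler_sum => k _.
  by case: ifP => //; rewrite normr0.
apply: le_trans e1 _.
rewrite exchange_big /= (@big_cat_nat _ _ _ K) //=.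
rewrite [X in _ + X]big_nat [X in _ + X]big1 ?addr0; last first.
  move=> k hk; apply: big1 => I _; case: ifP => // _.
  by rewrite hv ?normr0 //; case/andP: hk.
apply: ler_sum_nat => k _; rewrite sum_if_count.
rewrite -mulr_natr -[X in _ <= X]mulr1 ler_wpM2l // lern1.
exact: count_le1.
Qed.

Definition resample (R : realType) (v : rseq R) (rho : nat -> nat) : rseq R :=
  fun k => \sum_(rho k <= i < rho k.+1) v i.

Lemma resample_tele (R : realType) (v : rseq R) rho a b :
  {homo rho : m n / (m <= n)%N} -> (a <= b)%N ->
  \sum_(a <= k < b) resample v rho k = \sum_(rho a <= i < rho b) v i.
Proof.
move=> hr; elim: b => [|b IH] hab.
  have -> : a = 0%N by lia.
  by rewrite !big_geq.
case: (ltngtP a b.+1) => h; first 1 last; first lia.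
  by rewrite h !big_geq.
rewrite big_nat_recr /=; last lia.
rewrite IH; last lia.
rewrite /resample -big_cat_nat //; apply: hr; lia.
Qed.

Definition rs_int (rho : nat -> nat) (I : nat * nat) : nat * nat :=
  if (rho I.1 < rho I.2.+1)%N then (rho I.1, (rho I.2.+1).-1) else (1, 0)%N.

Lemma resample_isum (R : realType) (v : rseq R) rho I :
  {homo rho : m n / (m <= n)%N} ->
  interval_sum (resample v rho) I = interval_sum v (rs_int rho I).
Proof.
move=> hr; case: I => a b; rewrite /interval_sum /rs_int /=.
case: (leqP a b.+1) => hab.
  rewrite resample_tele //; case: ifP => h /=.
    by rewrite prednK //; lia.
  by rewrite !big_geq //; lia.
have h2 : (rho b.+1 <= rho a)%N by apply: hr; lia.
rewrite big_geq; last lia.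
by case: ifP => h /=; [lia | rewrite big_geq].
Qed.

Lemma rs_int_dj rho I J : {homo rho : m n / (m <= n)%N} ->
  djb I J -> djb (rs_int rho I) (rs_int rho J).
Proof.
move=> hr; rewrite /djb /rs_int.
case: ifP => hI; last by rewrite /= !orbT.
case: ifP => hJ; last by rewrite /= !orbT.
case: I J hI hJ => a b [c d] /= hI hJ.
have hab : (a <= b)%N by rewrite leqNgt; apply/negP => h; have := hr b.+1 a h; lia.
have hcd : (c <= d)%N by rewrite leqNgt; apply/negP => h; have := hr d.+1 c h; lia.
case/or4P => h; last 2 first; [lia | lia | |].
  have := hr b.+1 c h; lia.
have := hr d.+1 a h; lia.
Qed.

Lemma resample_jsq (R : realType) (v : rseq R) rho Is :
  {homo rho : m n / (m <= n)%N} ->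
  jsq (resample v rho) Is = jsq v (map (rs_int rho) Is).
Proof.
move=> hr; rewrite /jsq big_map; apply: eq_bigr => I _.
by rewrite resample_isum.
Qed.

Lemma resample_pd rho Is : {homo rho : m n / (m <= n)%N} ->
  pairwise_disjoint Is -> pairwise_disjoint (map (rs_int rho) Is).
Proof.
move=> hr /pdP h; apply/pdP; rewrite pairwise_map.
by apply: sub_pairwise h => I J; apply: rs_int_dj.
Qed.

Lemma resample_le (R : realType) (v : rseq R) rho Is :
  {homo rho : m n / (m <= n)%N} -> in_J v -> pairwise_disjoint Is ->
  jsq (resample v rho) Is <= jnorm v ^+ 2.
Proof.
move=> hr hv hIs; rewrite resample_jsq //; apply: jsq_le_jnorm => //.
exact: resample_pd.
Qed.

Lemma q_lt (q : nat -> nat) : (forall n, (q n < q n.+1)%N) ->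
  forall m n, (m < n)%N -> (q m < q n)%N.
Proof. by move=> hq m n; apply: (homo_ltn ltn_trans hq). Qed.

Lemma q_le (q : nat -> nat) : (forall n, (q n < q n.+1)%N) ->
  {homo q : m n / (m <= n)%N}.
Proof.
move=> hq m n; rewrite leq_eqVlt => /orP [/eqP -> //|h].
by apply: ltnW; apply: q_lt.
Qed.

Lemma q_ltE (q : nat -> nat) : (forall n, (q n < q n.+1)%N) ->
  forall m n, (q m < q n)%N = (m < n)%N.
Proof.
move=> hq m n; case: (ltnP m n) => h; first by apply: q_lt.
by apply/negbTE; rewrite -leqNgt; apply: q_le.
Qed.

Lemma q_ge (q : nat -> nat) : (forall n, (q n < q n.+1)%N) -> forall n, (n <= q n)%N.
Proof. by move=> hq; elim=> // n IH; apply: leq_ltn_trans IH (hq n). Qed.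

Definition fres (R : realType) (q : nat -> nat) (f : rseq R) n : rseq R :=
  fun k => if (q n <= k < q n.+1)%N then f k else 0.

Lemma fres_sum (R : realType) q (f : rseq R) N k :
  (forall n, (q n < q n.+1)%N) -> q 0%N = 0%N ->
  \sum_(n < N) fres q f n k = if (k < q N)%N then f k else 0.
Proof.
move=> hq hq0; elim: N => [|N IH]; first by rewrite big_ord0 hq0.
rewrite big_ord_recr /= IH /fres.
have := hq N; case: (ltnP k (q N)) => h1 h2.
  by rewrite /= addr0 ifT //; lia.
by rewrite add0r /=.
Qed.

Lemma fres_isum_zero (R : realType) q (f : rseq R) n a b :
  (forall n, (q n < q n.+1)%N) ->
  \sum_(q n <= k < q n.+1) f k = 0 ->
  (a <= b)%N -> ~~ (q n <= a < q n.+1)%N -> ~~ (q n <= b < q n.+1)%N ->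
  interval_sum (fres q f n) (a, b) = 0.
Proof.
move=> hq hz hab ha hb; rewrite /interval_sum /fres /=.
have := hq n => hqn.
case: (ltnP b (q n)) => h1.
  by apply: big1_seq => k; rewrite mem_index_iota => hk; case: ifP => //; lia.
case: (leqP (q n.+1) a) => h2.
  by apply: big1_seq => k; rewrite mem_index_iota => hk; case: ifP => //; lia.
have h3 : (a < q n)%N by move: ha; rewrite h2 andbT -ltnNge.
have h4 : (q n.+1 <= b)%N by move: hb; rewrite h1 /= -leqNgt.
rewrite (@big_cat_nat _ _ _ (q n)) /=; [|lia|lia].
rewrite (@big_cat_nat _ _ _ (q n.+1) (q n)) /=; [|lia|lia].
rewrite big1_seq ?add0r; last first.
  by move=> k; rewrite mem_index_iota => hk; case: ifP => //; lia.
rewrite [X in _ + X]big1_seq ?addr0; last first.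
  by move=> k; rewrite mem_index_iota => hk; case: ifP => //; lia.
rewrite -[RHS]hz; apply: eq_big_seq => k; rewrite mem_index_iota => hk.
by rewrite hk.
Qed.

Lemma one_term (R : realType) (P : pred nat) (t : nat -> R) N :
  (forall n m, P n -> P m -> n = m) ->
  (\sum_(n < N) (if P n then t n else 0)) ^+ 2 <=
  \sum_(n < N) (if P n then t n ^+ 2 else 0).
Proof.
move=> hP.
case: (pselect (exists n : 'I_N, P n)) => [[n0 hn0]|hno].
  rewrite (bigD1 n0) //= [X in _ <= X](bigD1 n0) //= hn0.
  rewrite big1 ?addr0; last first.
    by move=> i hi; case: ifP => // hPi; have := hP _ _ hPi hn0 => /val_inj e; rewrite e eqxx in hi.
  rewrite big1 ?addr0 //.
  by move=> i hi; case: ifP => // hPi; have := hP _ _ hPi hn0 => /val_inj e; rewrite e eqxx in hi.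
rewrite big1 ?expr0n /=; last by move=> i _; case: ifP => // h; exfalso; apply: hno; exists i.
by apply: sumr_ge0 => i _; case: ifP => // _; apply: sqr_ge0.
Qed.

Lemma region_bound (R : realType) q (f : rseq R) N Is :
  (forall n, (q n < q n.+1)%N) -> q 0%N = 0%N ->
  (forall n, (n < N)%N -> \sum_(q n <= k < q n.+1) f k = 0) ->
  (forall k, (q N <= k)%N -> f k = 0) ->
  jsq f Is <= 2 * \sum_(n < N) jsq (fres q f n) Is.
Proof.
move=> hq hq0 hz hf.
rewrite /jsq exchange_big /= mulr_sumr; apply: ler_sum => I _.
case: I => a b.
case: (leqP a b) => hab; last first.
  rewrite /interval_sum big_geq /=; last lia.
  rewrite expr0n /=; apply: mulr_ge0 => //; apply: sumr_ge0 => n _; apply: sqr_ge0.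
have e1 : interval_sum f (a, b) = \sum_(n < N) interval_sum (fres q f n) (a, b).
  rewrite /interval_sum exchange_big /=; apply: eq_bigr => k _.
  rewrite fres_sum //; case: ifP => // h; rewrite hf //; lia.
pose Pa n := (q n <= a < q n.+1)%N.
pose Pb n := ~~ Pa n && (q n <= b < q n.+1)%N.
set sg := fun n => interval_sum (fres q f n) (a, b).
have e2 : \sum_(n < N) sg n =
   \sum_(n < N) (if Pa n then sg n else 0) + \sum_(n < N) (if Pb n then sg n else 0).
  rewrite -big_split /=; apply: eq_bigr => [[n hn]] _ /=.
  rewrite /Pb; case: ifP => ha /=; first by rewrite addr0.
  case: ifP => hb; first by rewrite add0r.
  rewrite addr0; apply: fres_isum_zero => //; [exact: hz | exact: negbT ha | exact: negbT hb].
have uP : forall n m, (q n <= a < q n.+1)%N -> (q m <= a < q m.+1)%N -> n = m.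
  move=> n m /andP [h1 h2] /andP [h3 h4]; apply/eqP; rewrite eqn_leq.
  apply/andP; split; rewrite leqNgt; apply/negP => h; have := q_le hq h; lia.
have uQ : forall n m, (q n <= b < q n.+1)%N -> (q m <= b < q m.+1)%N -> n = m.
  move=> n m /andP [h1 h2] /andP [h3 h4]; apply/eqP; rewrite eqn_leq.
  apply/andP; split; rewrite leqNgt; apply/negP => h; have := q_le hq h; lia.
rewrite e1 -/sg e2.
set A := \sum_(n < N) _; set B := \sum_(n < N) _.
have hA : A ^+ 2 <= \sum_(n < N) (if Pa n then sg n ^+ 2 else 0).
  by apply: one_term => n m; apply: uP.
have hB : B ^+ 2 <= \sum_(n < N) (if Pb n then sg n ^+ 2 else 0).
  by apply: one_term => n m /andP [_ h1] /andP [_ h2]; apply: uQ.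
have hAB : \sum_(n < N) (if Pa n then sg n ^+ 2 else 0) +
           \sum_(n < N) (if Pb n then sg n ^+ 2 else 0) <= \sum_(n < N) sg n ^+ 2.
  rewrite -big_split /=; apply: ler_sum => n _; rewrite /Pb.
  case: (Pa n) => /=; first by rewrite addr0.
  by case: ifP; rewrite ?add0r // => _; apply: sqr_ge0.
have : (A + B) ^+ 2 <= 2 * (A ^+ 2 + B ^+ 2).
  have h := sqr_ge0 (A - B); rewrite sqrrB in h; rewrite sqrrD; lra.
lra.
Qed.

Definition rho (q : nat -> nat) (k : nat) : nat := count (fun n => (q n < k)%N) (iota 0 k).

Lemma rho_mono q : {homo rho q : m n / (m <= n)%N}.
Proof.
move=> m n hmn; rewrite /rho (_ : iota 0 n = iota 0 m ++ iota m (n - m)); last first.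
  by rewrite -iotaD; congr iota; lia.
rewrite count_cat; apply: leq_trans (leq_addr _ _).
by apply: sub_count => i /= h; lia.
Qed.

Lemma rho_q q : (forall n, (q n < q n.+1)%N) -> forall m, rho q (q m) = m.
Proof.
move=> hq m; rewrite /rho (_ : iota 0 (q m) = iota 0 m ++ iota m (q m - m)); last first.
  by rewrite -iotaD; congr iota; have := q_ge hq m; lia.
rewrite count_cat (eq_in_count (a2 := predT)); last first.
  by move=> i; rewrite mem_iota /= (q_ltE hq) => h; lia.
rewrite count_predT size_iota (eq_in_count (a2 := pred0)); last first.
  by move=> i; rewrite mem_iota /= (q_ltE hq) => h; apply/negbTE; lia.
by rewrite count_pred0 addn0.
Qed.

Definition lincomb_pt (R : realType) (x : nat -> rseq R) (b : nat -> R) N k :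
  lincomb x b N k = \sum_(n < N) b n * x n k := erefl.

Lemma x_zero (R : realType) (x : nat -> rseq R) q n k :
  (forall n k, x n k != 0 -> (q n <= k < q n.+1)%N) ->
  ~~ (q n <= k < q n.+1)%N -> x n k = 0.
Proof. by move=> hs h; apply/eqP; apply/negPn/negP => /hs; rewrite (negbTE h). Qed.

Lemma lincomb_region (R : realType) (x : nat -> rseq R) q b N n k :
  (forall n, (q n < q n.+1)%N) ->
  (forall n k, x n k != 0 -> (q n <= k < q n.+1)%N) ->
  (n < N)%N -> (q n <= k < q n.+1)%N -> lincomb x b N k = b n * x n k.
Proof.
move=> hq hs hn hk; rewrite /lincomb (bigD1 (Ordinal hn)) //= big1 ?addr0 //.
move=> [m hm] /= hmn; rewrite (x_zero hs) ?mulr0 //.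
apply/negP => /andP [h1 h2]; move: hmn; rewrite -val_eqE /= => /negP; apply.
rewrite eqn_leq; apply/andP; split; rewrite leqNgt; apply/negP => h.
  by have := q_le hq h; lia.
by have := q_le hq h; lia.
Qed.

Lemma lincomb_beyond (R : realType) (x : nat -> rseq R) q b N k :
  (forall n, (q n < q n.+1)%N) ->
  (forall n k, x n k != 0 -> (q n <= k < q n.+1)%N) ->
  (q N <= k)%N -> lincomb x b N k = 0.
Proof.
move=> hq hs hk; rewrite /lincomb big1 // => [[m hm]] _ /=.
rewrite (x_zero hs) ?mulr0 //; have := q_le hq hm; lia.
Qed.

Definition sreg (R : realType) (x : nat -> rseq R) q n : R :=
  \sum_(q n <= k < q n.+1) x n k.

Lemma decomp (R : realType) (x : nat -> rseq R) q C2 b N Bv Is :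
  (forall n, (q n < q n.+1)%N) -> q 0%N = 0%N ->
  (forall n k, x n k != 0 -> (q n <= k < q n.+1)%N) ->
  (forall n Is, pairwise_disjoint Is -> jsq (x n) Is <= C2) ->
  (forall Is, pairwise_disjoint Is ->
     jsq (fun n => if (n < N)%N then sreg x q n * b n else 0) Is <= Bv) ->
  pairwise_disjoint Is ->
  jsq (lincomb x b N) Is <= 2 * Bv + 16 * C2 * \sum_(n < N) b n ^+ 2.
Proof.
move=> hq hq0 hs hC hBv hIs.
set v := fun n => if (n < N)%N then sreg x q n * b n else 0.
set z := resample v (rho q).
set f := fun k => lincomb x b N k - z k.
have hr := @rho_mono q.
have e0 : forall k, lincomb x b N k = z k + f k by move=> k; rewrite /f addrC subrK.
have hs2 : forall n, sreg x q n ^+ 2 <= C2.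
  move=> n; have := hC n [:: (q n, (q n.+1).-1)] _.
  rewrite /jsq big_cons big_nil addr0 /interval_sum /= prednK; last by have := hq n; lia.
  apply; apply/pdP => //.
have hz : forall Is, pairwise_disjoint Is -> jsq z Is <= Bv.
  by move=> Js hJs; rewrite resample_jsq //; apply: hBv; apply: resample_pd.
have hfz : forall n, (n < N)%N -> \sum_(q n <= k < q n.+1) f k = 0.
  move=> n hn; rewrite /f sumrB.
  rewrite (eq_big_nat _ _ (F2 := fun k => b n * x n k)); last first.
    by move=> k hk; apply: lincomb_region.
  rewrite -mulr_sumr resample_tele //; last by have := hq n; lia.
  rewrite !rho_q // big_nat1 /v hn /sreg; apply/eqP; rewrite subr_eq0 mulrC //.
have hfb : forall k, (q N <= k)%N -> f k = 0.
  move=> k hk; rewrite /f (lincomb_beyond _ hq hs hk) sub0r /z /resample big1_seq ?oppr0 //.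
  move=> i /andP [_]; rewrite mem_index_iota => /andP [h1 _]; rewrite /v ifF //.
  apply/negbTE; rewrite -leqNgt; have := hr _ _ hk; rewrite rho_q //; lia.
have hfres : forall n, (n < N)%N -> forall Js, pairwise_disjoint Js ->
    jsq (fres q f n) Js <= 4 * C2 * b n ^+ 2.
  move=> n hn Js hJs.
  pose e := fun i => if i == n then v i else 0.
  have ez : forall k, fres q z n k = resample e (rho q) k.
    move=> k; rewrite /fres /resample /e.
    case: ifP => hk.
      apply: eq_big_seq => i; rewrite mem_index_iota => /andP [h1 h2].
      case/andP: (hk) => hk1 hk2.
      have ha := hr _ _ hk1; rewrite rho_q // in ha.
      have hb := hr _ _ hk2; rewrite rho_q // in hb.
      by rewrite ifT //; apply/eqP; lia.
    rewrite big1_seq // => i /andP [_]; rewrite mem_index_iota => /andP [h1 h2].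
    case: eqP => // ein; subst i; exfalso; move/negbT: hk; rewrite negb_and -leqNgt -ltnNge.
    case/orP => h.
      by have := hr _ _ h; rewrite rho_q //; lia.
    by have := hr _ _ h; rewrite rho_q //; lia.
  have ef : forall k, fres q f n k = b n * x n k + (-1) * fres q z n k.
    move=> k; rewrite /fres /f; case: ifP => hk.
      by rewrite (lincomb_region b hq hs hn hk) mulN1r.
    by rewrite (x_zero hs) ?hk // mulr0 mulr0 addr0.
  rewrite (jsq_ext _ ef); apply: le_trans (jsq_add _ _ _) _.
  rewrite jsq_scale jsq_scale (jsq_ext _ ez) resample_jsq //.
  have h1 : jsq (x n) Js <= C2 by apply: hC.
  have h2 : jsq e (map (rs_int (rho q)) Js) <= (\sum_(0 <= k < n.+1) `|e k|) ^+ 2.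
    apply: jsq_l1; last exact: resample_pd.
    by move=> k hk; rewrite /e ifF //; apply/negbTE; rewrite neq_ltn; lia.
  rewrite big_nat_recr //= big1_seq ?add0r in h2; last first.
    by move=> k /andP [_]; rewrite mem_index_iota /e => /andP [_ hk]; rewrite ifF ?normr0 //; apply/negbTE; rewrite neq_ltn hk.
  rewrite /e eqxx /v hn real_normK ?num_real // exprMn in h2.
  have h3 := hs2 n.
  have hb2 : 0 <= b n ^+ 2 by apply: sqr_ge0.
  have : b n ^+ 2 * jsq (x n) Js <= b n ^+ 2 * C2 by apply: ler_wpM2l.
  have : sreg x q n ^+ 2 * b n ^+ 2 <= C2 * b n ^+ 2 by apply: ler_wpM2r.
  rewrite sqrrN expr1n mul1r; lra.
rewrite (jsq_ext _ e0); apply: le_trans (jsq_add _ _ _) _.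
have hf : jsq f Is <= 2 * \sum_(n < N) jsq (fres q f n) Is by apply: region_bound.
have hf2 : \sum_(n < N) jsq (fres q f n) Is <= \sum_(n < N) 4 * C2 * b n ^+ 2.
  by apply: ler_sum => [[n hn]] _; apply: hfres.
rewrite -mulr_sumr in hf2.
have := hz _ hIs; lra.
Qed.

Definition clipI (K : nat) (I : nat * nat) : nat * nat := (maxn I.1 K, I.2).

Lemma clip_isum (R : realType) (v : rseq R) K I :
  interval_sum (fun k => if (K <= k)%N then v k else 0) I = interval_sum v (clipI K I).
Proof.
case: I => a b; rewrite /interval_sum /clipI.
case: (leqP K a) => hKa.
  rewrite /=; apply: eq_big_seq => k; rewrite mem_index_iota => hk.
  by rewrite ifT //; lia.
rewrite /=.
case: (leqP K b.+1) => hKb.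
  rewrite (@big_cat_nat _ _ _ K) /=; [|lia|lia].
  rewrite big1_seq ?add0r; last by move=> k /andP [_]; rewrite mem_index_iota => hk; rewrite ifF //; lia.
  by apply: eq_big_seq => k; rewrite mem_index_iota => hk; rewrite ifT //; lia.
rewrite [RHS]big_geq; last lia.
by apply: big1_seq => k /andP [_]; rewrite mem_index_iota => hk; rewrite ifF //; lia.
Qed.

Lemma clip_pd K Is : pairwise_disjoint Is -> pairwise_disjoint (map (clipI K) Is).
Proof.
move=> /pdP h; apply/pdP; rewrite pairwise_map; apply: sub_pairwise h.
move=> [a b] [c d]; rewrite /djb /clipI /=; case/or4P => h; lia.
Qed.

Lemma clip_jsq (R : realType) (v : rseq R) K Is :
  jsq (fun k => if (K <= k)%N then v k else 0) Is = jsq v (map (clipI K) Is).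
Proof. by rewrite /jsq big_map; apply: eq_bigr => I _; rewrite clip_isum. Qed.

Lemma tail_small (R : realType) (v : rseq R) (eps : R) : in_J v -> 0 < eps ->
  exists K, forall K', (K <= K')%N -> forall Is, pairwise_disjoint Is ->
    jsq (fun k => if (K' <= k)%N then v k else 0) Is <= eps.
Proof.
move=> [C hC] he; apply: (@contra_notP _ False); last by [].
move=> hno.
have H : forall K, exists K', (K <= K')%N /\ exists Is, pairwise_disjoint Is /\
    eps < jsq v (map (clipI K') Is).
  move=> K; have : ~ (forall K', (K <= K')%N -> forall Is, pairwise_disjoint Is ->
    jsq (fun k => if (K' <= k)%N then v k else 0) Is <= eps) by move=> h; apply: hno; exists K.
  move/existsNP => [K' /not_implyP [hK' /existsNP [Is /not_implyP [hIs hn]]]].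
  exists K'; split => //; exists Is; split => //.
  by rewrite -clip_jsq; rewrite ltNge; apply/negP.
have ind : forall m : nat, exists Is B, pairwise_disjoint Is /\
    all (fun I => (I.2 < B)%N) Is /\ m%:R * eps <= jsq v Is.
  elim=> [|m [Is [B [hIs [hB hm]]]]].
    by exists [::], 0%N; split; [exact: pd_nil | rewrite mul0r jsq_nil].
  have [K' [hK' [Js [hJs hJ]]]] := H B.
  set Js' := map (clipI K') Js.
  exists (Is ++ Js'), (maxn B (\max_(J <- Js') J.2).+1); split; [|split].
  - apply/pdP; rewrite pairwise_cat; apply/and3P; split.
    + apply/allrelP => I J hI hJ'; have := allP hB I hI.
      move: hJ' => /mapP [J0 _ ->]; rewrite /djb /clipI /=; lia.
    + exact/pdP.
    + exact/pdP/clip_pd.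
  - rewrite all_cat; apply/andP; split.
      by apply/allP => I hI; have := allP hB I hI; lia.
    apply/allP => J hJ'; apply: leq_trans (leq_maxr _ _); rewrite ltnS.
    by apply: (leq_bigmax_seq (F := fun I : nat * nat => I.2)).
  - rewrite /jsq big_cat /= -/(jsq v Is) -/(jsq v Js') -natr1 mulrDl mul1r.
    by apply: lerD => //; apply: ltW.
have hC0 : 0 <= C by have := hC _ pd_nil; rewrite jsq_nil.
have hCe : 0 <= C / eps by apply: divr_ge0 => //; apply: ltW.
have hm := archi_boundP hCe.
set m := Num.Def.archi_bound _ in hm.
have [Is [B [hIs [_ hm2]]]] := ind m.
have := hC _ hIs; have : C < m%:R * eps by rewrite -ltr_pdivrMr.
lra.
Qed.

Lemma in_J_lin (R : realType) (u v : rseq R) al be : in_J u -> in_J v ->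
  in_J (fun k => al * u k + be * v k).
Proof.
move=> [Cu hu] [Cv hv]; exists (2 * (al ^+ 2 * Cu) + 2 * (be ^+ 2 * Cv)) => Is hIs.
apply: le_trans (jsq_add _ _ _) _; rewrite !jsq_scale.
have h1 : al ^+ 2 * jsq u Is <= al ^+ 2 * Cu by apply: ler_wpM2l; [apply: sqr_ge0 | apply: hu].
have h2 : be ^+ 2 * jsq v Is <= be ^+ 2 * Cv by apply: ler_wpM2l; [apply: sqr_ge0 | apply: hv].
lra.
Qed.

Lemma isum_le_jnorm (R : realType) (v : rseq R) I : in_J v ->
  interval_sum v I ^+ 2 <= jnorm v ^+ 2.
Proof.
move=> hv; have := jsq_le_jnorm (Is := [:: I]) hv.
by rewrite /jsq big_cons big_nil addr0; apply; apply/pdP.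
Qed.

Lemma jsq_upto (R : realType) (u v : rseq R) N Is :
  (forall k, (k < N)%N -> u k = v k) -> all (fun I => (I.2 < N)%N) Is ->
  jsq u Is = jsq v Is.
Proof.
move=> h hI; rewrite /jsq !big_seq; apply: eq_bigr => I hIs.
have := allP hI I hIs => hN; rewrite /interval_sum; congr (_ ^+ 2).
by apply: eq_big_seq => k; rewrite mem_index_iota => hk; apply: h; lia.
Qed.

Lemma bigmax_bound (Is : seq (nat * nat)) :
  all (fun I => (I.2 < (\max_(J <- Is) J.2).+1)%N) Is.
Proof.
apply/allP => I hI; rewrite ltnS.
exact: (leq_bigmax_seq (F := fun I : nat * nat => I.2)).
Qed.

Lemma lincomb_ext_zero (R : realType) (x : nat -> rseq R) b N N' k :
  (N <= N')%N -> (forall n, (N <= n < N')%N -> b n * x n k = 0) ->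
  lincomb x b N' k = lincomb x b N k.
Proof.
move=> hN h; rewrite /lincomb -!(big_mkord xpredT (fun n => b n * x n k)).
rewrite (@big_cat_nat _ _ _ N) //= [X in _ + X]big1_seq ?addr0 //.
by move=> n /andP [_]; rewrite mem_index_iota => hn; apply: h.
Qed.

Lemma lincomb_stable (R : realType) (x : nat -> rseq R) q b N N' k :
  (forall n, (q n < q n.+1)%N) ->
  (forall n k, x n k != 0 -> (q n <= k < q n.+1)%N) ->
  (k < q N)%N -> (k < q N')%N -> lincomb x b N k = lincomb x b N' k.
Proof.
move=> hq hs h1 h2.
have gen : forall M M', (M <= M')%N -> (k < q M)%N -> lincomb x b M' k = lincomb x b M k.
  move=> M M' hM hk; apply: lincomb_ext_zero => // n /andP [hn _].
  by rewrite (x_zero hs) ?mulr0 //; have := q_le hq hn; lia.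
have e1 := gen N (maxn N N') (leq_maxl _ _) h1.
have e2 := gen N' (maxn N N') (leq_maxr _ _) h2.
by rewrite -e1 e2.
Qed.

Lemma lincomb_inJ (R : realType) (x : nat -> rseq R) q b N :
  (forall n, (q n < q n.+1)%N) ->
  (forall n k, x n k != 0 -> (q n <= k < q n.+1)%N) ->
  in_J (lincomb x b N).
Proof.
move=> hq hs; exists ((\sum_(0 <= k < q N) `|lincomb x b N k|) ^+ 2) => Is hIs.
by apply: jsq_l1 => // k hk; apply: lincomb_beyond.
Qed.

Lemma unit_lincomb (R : realType) (b : nat -> R) N k :
  lincomb (@unit_vec R) b N k = if (k < N)%N then b k else 0.
Proof.
rewrite /lincomb /unit_vec; case: ifP => hk.
  rewrite (bigD1 (Ordinal hk)) //= eqxx mulr1 big1 ?addr0 //.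
  move=> [n hn] /= hne; rewrite ifF ?mulr0 //; apply/negbTE.
  by move: hne; rewrite -val_eqE /= eq_sym.
rewrite big1 // => [[n hn]] _ /=; rewrite ifF ?mulr0 //; apply/negbTE.
by apply/eqP => e; subst; rewrite hn in hk.
Qed.

Lemma count_mono (P : pred nat) m n : (m <= n)%N ->
  (\sum_(i < m) P i <= \sum_(i < n) P i)%N.
Proof.
move=> h; rewrite -!(big_mkord xpredT (fun i => nat_of_bool (P i))).
by rewrite (@big_cat_nat _ _ _ m 0 n) //= leq_addr.
Qed.

Lemma eventually_good (R : realType) (P : pred nat) (B : R) :
  (forall N, (\sum_(n < N) (P n)%:R : R) <= B) ->
  exists N0, forall n, (N0 <= n)%N -> ~~ P n.
Proof.
move=> hB; apply: (@contra_notP _ False); last by [].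
move=> hno.
have H : forall N0, exists n, (N0 <= n)%N /\ P n.
  move=> N0; apply: (@contra_notP _ False); last by [].
  move=> h; apply: hno; exists N0 => n hn; apply/negP => hP; apply: h; by exists n; split.
have ind : forall m, exists N, (m <= \sum_(n < N) P n)%N.
  elim=> [|m [N hN]]; first by exists 0%N.
  have [n [hn hPn]] := H N; exists n.+1.
  rewrite big_ord_recr /= hPn addn1 ltnS; apply: leq_trans hN _.
  exact: count_mono.
have hB0 : 0 <= B by have := hB 0%N; rewrite big_ord0.
have [N hN] := ind (Num.Def.archi_bound B).
have := archi_boundP hB0; have := hB N.
rewrite -natr_sum => h1 h2.
have : ((Num.Def.archi_bound B)%:R : R) <= (\sum_(n < N) P n)%:R by rewrite ler_nat.
lra.
Qed.

Definition badp (R : realType) (x : nat -> rseq R) q (c : R) n : bool :=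
  `|sreg x q n| < c / 2.

Lemma bad_count (R : realType) (x : nat -> rseq R) q (C c : R) N :
  (forall n, (q n < q n.+1)%N) -> q 0%N = 0%N ->
  (forall n k, x n k != 0 -> (q n <= k < q n.+1)%N) ->
  (forall n Is, pairwise_disjoint Is -> jsq (x n) Is <= C ^+ 2) ->
  0 < c ->
  (forall a N, c * jnorm (lincomb (@unit_vec R) a N) <= jnorm (lincomb x a N)) ->
  (\sum_(n < N) (badp x q c n)%:R) * c ^+ 2 <= 32 * C ^+ 2.
Proof.
move=> hq hq0 hs hx hc hlow.
pose b := fun n => ((badp x q c n)%:R : R).
set M := \sum_(n < N) _.
have hM : M = \sum_(n < N) b n by [].
have hb01 : forall n, b n ^+ 2 = b n.
  by move=> n; rewrite /b; case: (badp _ _ _ _); rewrite /= ?mulr1n ?mulr0n ?expr1n ?expr0n.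
have hb0 : forall n, 0 <= b n.
  by move=> n; rewrite /b; case: (badp _ _ _ _); rewrite /= ?mulr1n ?mulr0n.
have hM0 : 0 <= M by rewrite hM; apply: sumr_ge0 => n _.
have hsb : forall n, `|sreg x q n * b n| <= c / 2 * b n.
  move=> n; rewrite /b; case: (boolP (badp x q c n)) => h /=.
    by rewrite !mulr1 ltW.
  by rewrite !mulr0 normr0.
have hBv : forall Is, pairwise_disjoint Is ->
    jsq (fun n => if (n < N)%N then sreg x q n * b n else 0) Is <= (c / 2 * M) ^+ 2.
  move=> Is hIs; apply: le_trans (jsq_l1 (K := N) _ hIs) _.
    by move=> k hk; rewrite ifF //; apply/negbTE; rewrite -leqNgt.
  rewrite ler_sqr ?nnegrE ?sumr_ge0 //; last first.
    by apply: mulr_ge0 => //; apply: divr_ge0 => //; apply: ltW.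
  rewrite hM mulr_sumr big_mkord; apply: ler_sum => [[n hn]] _ /=.
  by rewrite hn.
have hdec : forall Is, pairwise_disjoint Is ->
    jsq (lincomb x b N) Is <= 2 * (c / 2 * M) ^+ 2 + 16 * C ^+ 2 * M.
  move=> Is hIs.
  have e : \sum_(n < N) b n ^+ 2 = M by rewrite hM; apply: eq_bigr => n _; exact: hb01.
  by apply: le_trans (decomp hq hq0 hs hx hBv hIs) _; rewrite e.
have [_ hT] := jnorm_bound hdec.
set E := lincomb (@unit_vec R) b N.
have hEJ : in_J E.
  exists ((\sum_(0 <= k < N) `|E k|) ^+ 2) => Is hIs; apply: jsq_l1 => // k hk.
  by rewrite /E unit_lincomb ifF //; apply/negbTE; rewrite -leqNgt.
have hEM : M ^+ 2 <= jnorm E ^+ 2.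
  case: (posnP N) => hN.
    by rewrite hM hN big_ord0 expr0n /=; apply: sqr_ge0.
  apply: le_trans (isum_le_jnorm (0, N.-1)%N hEJ); rewrite /interval_sum /= prednK //.
  rewrite hM big_mkord (eq_bigr (fun n : 'I_N => E n)) //.
  by move=> [n hn] _; rewrite /E unit_lincomb /= hn.
have hlo := hlow b N; rewrite -/E in hlo.
have hE0 := jnorm_ge0 E.
have h1 : c ^+ 2 * jnorm E ^+ 2 <= jnorm (lincomb x b N) ^+ 2.
  rewrite -exprMn; apply: lerXn2r => //; rewrite nnegrE //.
    by apply: mulr_ge0 => //; apply: ltW.
  exact: jnorm_ge0.
have hc2 : 0 < c ^+ 2 by apply: exprn_gt0.
have h2 : c ^+ 2 * M ^+ 2 <= c ^+ 2 * jnorm E ^+ 2 by apply: ler_wpM2l => //; apply: ltW.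
have h3 : c ^+ 2 * M ^+ 2 <= 32 * C ^+ 2 * M.
  move: hT; rewrite exprMn (_ : (c / 2) ^+ 2 = c ^+ 2 / 4); last by rewrite expr_div_n; congr (_ / _); rewrite -natrX.
  move=> hT; have := le_trans h2 (le_trans h1 hT); lra.
case: (eqVneq M 0) => hMz; first by rewrite hMz mul0r; apply: mulr_ge0 => //; apply: sqr_ge0.
have hMp : 0 < M by rewrite lt_def hMz hM0.
rewrite mulrC -(ler_pM2r hMp); move: h3; rewrite expr2; lra.
Qed.

Definition chi (R : realType) (x : nat -> rseq R) q j n : R := interval_sum (x n) (q n, j n).
Definition acoef (R : realType) (x : nat -> rseq R) q j (y : rseq R) n : R :=
  interval_sum y (q n, j n) / chi x q j n.

Lemma abs_isum_le (R : realType) (y : rseq R) I : in_J y -> `|interval_sum y I| <= jnorm y.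
Proof.
move=> hy; have h := isum_le_jnorm I hy.
by rewrite -ler_sqr ?nnegrE ?normr_ge0 ?jnorm_ge0 // real_normK ?num_real.
Qed.

Lemma region_pd (q : nat -> nat) N : (forall n, (q n < q n.+1)%N) ->
  pairwise_disjoint (map (fun n => (q n, (q n.+1).-1)) (iota 0 N)).
Proof.
move=> hq; apply/pdP; rewrite pairwise_map.
have : pairwise ltn (iota 0 N) by rewrite -sorted_pairwise ?iota_ltn_sorted //; exact: ltn_trans.
apply: sub_pairwise => n m /= hnm; rewrite /djb /=; apply/orP; left.
have := q_le hq hnm; have := hq n; lia.
Qed.

Lemma main_bound (R : realType) (x : nat -> rseq R) q j (C dl : R) N0 y N Is :
  (forall n, (q n < q n.+1)%N) -> q 0%N = 0%N ->
  (forall n k, x n k != 0 -> (q n <= k < q n.+1)%N) ->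
  (forall n Is, pairwise_disjoint Is -> jsq (x n) Is <= C ^+ 2) ->
  (forall n, (q n <= j n < q n.+1)%N) ->
  (forall n, chi x q j n != 0) ->
  0 < dl ->
  (forall n, (N0 <= n)%N -> j n = (q n.+1).-1 /\ dl <= `|sreg x q n|) ->
  in_J y -> pairwise_disjoint Is ->
  jsq (lincomb x (acoef x q j y) N) Is <=
  (4 + 4 * (\sum_(n < N0) (`|sreg x q n / chi x q j n| + 1)) ^+ 2 +
   16 * C ^+ 2 * (1 / dl ^+ 2 + \sum_(n < N0) 1 / chi x q j n ^+ 2)) * jnorm y ^+ 2.
Proof.
move=> hq hq0 hs hx hj hchi hdl hgood hy hIs.
set K1 := \sum_(n < N0) _. set K2 := \sum_(n < N0) _.
set a := acoef x q j y.
set Y := jnorm y.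
have hY0 : 0 <= Y by apply: jnorm_ge0.
pose W n := \sum_(q n <= k < q n.+1) y k.
have hgoodW : forall n, (N0 <= n)%N -> interval_sum y (q n, j n) = W n /\ chi x q j n = sreg x q n.
  move=> n hn; have [hjn _] := hgood n hn.
  have hp : (0 < q n.+1)%N by have := hq n; lia.
  by rewrite /chi /interval_sum /= hjn (prednK hp); split.
have hsne : forall n, (N0 <= n)%N -> sreg x q n != 0.
  move=> n hn; have [_ h] := hgood n hn; rewrite -normr_gt0; exact: lt_le_trans hdl h.
pose v := fun n => if (n < N)%N then sreg x q n * a n else 0.
pose w := resample y (fun m => q (minn m N)).
have hmono : {homo (fun m => q (minn m N)) : m n / (m <= n)%N}.
  by move=> m n hmn; apply: q_le => //; rewrite leq_min geq_minr andbT; apply: leq_trans (geq_minl _ _) hmn.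
have hw : forall n, w n = if (n < N)%N then W n else 0.
  move=> n; rewrite /w /resample; case: ifP => hn.
    by rewrite (minn_idPl (ltnW hn)) (minn_idPl hn).
  move/negbT: hn; rewrite -leqNgt => hn.
  have e1 : minn n N = N by apply/minn_idPr.
  have e2 : minn n.+1 N = N by apply/minn_idPr; lia.
  by rewrite e1 e2 big_geq.
have hwJ : forall Js, pairwise_disjoint Js -> jsq w Js <= Y ^+ 2.
  by move=> Js hJs; apply: resample_le.
pose corr := fun n => v n - w n.
have hcorr0 : forall n, (N0 <= n)%N -> corr n = 0.
  move=> n hn; rewrite /corr /v hw; case: ifP => _; last by rewrite subrr.
  have [e1 e2] := hgoodW n hn; rewrite /a /acoef e1 e2 mulrC divfK ?subrr //.
  exact: hsne.
have hcorrb : forall n, `|corr n| <= (`|sreg x q n / chi x q j n| + 1) * Y.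
  move=> n; rewrite /corr /v hw mulrDl mul1r.
  apply: le_trans (ler_normB _ _) _; apply: lerD.
    case: ifP => _; last by rewrite normr0; apply: mulr_ge0.
    rewrite /a /acoef mulrA mulrAC normrM ler_wpM2l //.
    by apply: abs_isum_le.
  case: ifP => _; last by rewrite normr0.
  have hp : (0 < q n.+1)%N by have := hq n; lia.
  by have := abs_isum_le (q n, (q n.+1).-1) hy; rewrite /interval_sum /= (prednK hp).
have hv : forall Js, pairwise_disjoint Js -> jsq v Js <= 2 * Y ^+ 2 + 2 * (K1 * Y) ^+ 2.
  move=> Js hJs.
  have ev : forall k, v k = w k + corr k by move=> k; rewrite /corr addrC subrK.
  rewrite (jsq_ext _ ev); apply: le_trans (jsq_add _ _ _) _.
  have h1 := hwJ _ hJs.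
  have h2 : jsq corr Js <= (\sum_(0 <= k < N0) `|corr k|) ^+ 2.
    by apply: jsq_l1 => // k hk; apply: hcorr0.
  have h3 : \sum_(0 <= k < N0) `|corr k| <= K1 * Y.
    by rewrite /K1 mulr_suml big_mkord; apply: ler_sum => k _; exact: hcorrb.
  have h0 : 0 <= \sum_(0 <= k < N0) `|corr k| by apply: sumr_ge0 => k _; apply: normr_ge0.
  have h4 : (\sum_(0 <= k < N0) `|corr k|) ^+ 2 <= (K1 * Y) ^+ 2.
    by rewrite expr2 [X in _ <= X]expr2; apply: ler_pM.
  lra.
have hW : \sum_(n < N) W n ^+ 2 <= Y ^+ 2.
  have h := jsq_le_jnorm hy (@region_pd q N hq).
  rewrite /jsq big_map in h; apply: (le_trans _ h).
  rewrite -(big_mkord xpredT (fun n => W n ^+ 2)) /index_iota subn0.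
  apply: ler_sum => n _.
  have hp : (0 < q n.+1)%N by have := hq n; lia.
  by rewrite /interval_sum /= (prednK hp).
have hdl2 : 0 < dl ^+ 2 by apply: exprn_gt0.
have ha2 : forall n, a n ^+ 2 <= W n ^+ 2 / dl ^+ 2 +
    (if (n < N0)%N then Y ^+ 2 * (1 / chi x q j n ^+ 2) else 0).
  move=> n; have hW0 : 0 <= W n ^+ 2 / dl ^+ 2 by apply: divr_ge0; [apply: sqr_ge0 | apply: ltW].
  case: (ltnP n N0) => hn.
    suff : a n ^+ 2 <= Y ^+ 2 * (1 / chi x q j n ^+ 2) by lra.
    rewrite /a /acoef expr_div_n mul1r; apply: ler_wpM2r.
      by rewrite invr_ge0; apply: sqr_ge0.
    exact: isum_le_jnorm.
  have [e1 e2] := hgoodW n hn; have [_ hd] := hgood n hn.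
  rewrite addr0 /a /acoef e1 e2 !expr_div_n; apply: ler_wpM2l; first exact: sqr_ge0.
  have hs2 : dl ^+ 2 <= sreg x q n ^+ 2.
    by rewrite -[sreg x q n ^+ 2]real_normK ?num_real // expr2 [X in _ <= X]expr2; apply: ler_pM => //; apply: ltW.
  rewrite lef_pV2 ?posrE //; apply: lt_le_trans hdl2 hs2.
have hsum : \sum_(n < N) a n ^+ 2 <= Y ^+ 2 / dl ^+ 2 + K2 * Y ^+ 2.
  apply: le_trans (_ : _ <= \sum_(n < N) (W n ^+ 2 / dl ^+ 2 +
    (if (n < N0)%N then Y ^+ 2 * (1 / chi x q j n ^+ 2) else 0))) _.
    by apply: ler_sum => n _; apply: ha2.
  rewrite big_split /=.
  apply: lerD.
    rewrite -mulr_suml; apply: ler_wpM2r => //; by rewrite invr_ge0; apply: ltW.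
  rewrite /K2 mulr_suml.
  rewrite -(big_mkord xpredT (fun n => if (n < N0)%N then Y ^+ 2 * (1 / chi x q j n ^+ 2) else 0)).
  rewrite -(big_mkord xpredT (fun n => 1 / chi x q j n ^+ 2 * Y ^+ 2)).
  apply: le_trans (_ : _ <= \sum_(0 <= n < maxn N N0)
     (if (n < N0)%N then Y ^+ 2 * (1 / chi x q j n ^+ 2) else 0)) _.
    rewrite [X in _ <= X](@big_cat_nat _ _ _ N) ?leq_maxl //= lerDl.
    apply: sumr_ge0 => n _; case: ifP => // _; apply: mulr_ge0; first exact: sqr_ge0.
    by rewrite mul1r invr_ge0; apply: sqr_ge0.
  rewrite (@big_cat_nat _ _ _ N0) ?leq_maxr //= [X in _ + X]big1_seq ?addr0; last first.
    by move=> n /andP [_]; rewrite mem_index_iota => hn; rewrite ifF //; apply/negbTE; rewrite -leqNgt; case/andP: hn.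
  apply: ler_sum_nat => n hn; rewrite ifT; last by case/andP: hn.
  by rewrite mulrC.
have hmain := decomp hq hq0 hs hx hv hIs.
have hC2 : 0 <= C ^+ 2 by apply: sqr_ge0.
have := ler_wpM2l hC2 hsum.
move: hmain; rewrite -/a; lra.
Qed.

Lemma in_J_ext (R : realType) (u v : rseq R) : (forall k, u k = v k) -> in_J u -> in_J v.
Proof. by move=> h [B hB]; exists B => Is hIs; rewrite -(jsq_ext _ h); apply: hB. Qed.

Lemma jsq_single (R : realType) (u : rseq R) k : jsq u [:: (k, k)] = u k ^+ 2.
Proof. by rewrite /jsq big_cons big_nil addr0 /interval_sum /= big_nat1. Qed.

Lemma pd_single k : pairwise_disjoint [:: (k, k)].
Proof. by apply/pdP. Qed.

Lemma jnorm_ext (R : realType) (u v : rseq R) : (forall k, u k = v k) -> jnorm u = jnorm v.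
Proof. by move=> h; congr jnorm; apply: funext. Qed.

Lemma isum_x_other (R : realType) (x : nat -> rseq R) q j m n :
  (forall n, (q n < q n.+1)%N) ->
  (forall n k, x n k != 0 -> (q n <= k < q n.+1)%N) ->
  (forall n, (q n <= j n < q n.+1)%N) -> m != n ->
  interval_sum (x m) (q n, j n) = 0.
Proof.
move=> hq hs hj hmn; rewrite /interval_sum /=; apply: big1_seq => k /andP [_].
rewrite mem_index_iota => hk; apply: (x_zero hs); apply/negP => /andP [h1 h2].
have := hj n => /andP [hj1 hj2].
move: hmn; rewrite neq_ltn => /orP [] h.
  by have := q_le hq h; lia.
by have := q_le hq h; lia.
Qed.

Unset Implicit Arguments.

Theorem mainTheorem14 (R : realType) (x : nat -> rseq R) :
  block_sequence x ->
  equivalent_seqs x (@unit_vec R) ->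
  complemented_in_J (closed_span x).
Proof.
move=> [hfin [hnz hord]] [c [C [hc [hC hequiv]]]].
pose p n := ex_minn (hnz n).
have hp1 : forall n, x n (p n) != 0 by move=> n; rewrite /p; case: ex_minnP.
have hp2 : forall n k, (k < p n)%N -> x n k = 0.
  move=> n k; rewrite /p; case: ex_minnP => m _ hm hk; apply/eqP; apply/negPn/negP => h.
  by have := hm k h; lia.
pose q n := if n is n'.+1 then p n'.+1 else 0%N.
have hq : forall n, (q n < q n.+1)%N.
  case=> [|n] /=; first by have := hord 0%N _ _ (hp1 0%N) (hp1 1%N); lia.
  exact: hord _ _ _ (hp1 n.+1) (hp1 n.+2).
have hq0 : q 0%N = 0%N by [].
have hs : forall n k, x n k != 0 -> (q n <= k < q n.+1)%N.
  move=> n k h; apply/andP; split; last exact: hord _ _ _ h (hp1 n.+1).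
  case: n h => [|n] h //=; rewrite leqNgt; apply/negP => hk; move: h; rewrite hp2 ?eqxx //.
have hpq : forall n, (q n <= p n < q n.+1)%N by move=> n; apply: hs.
have hxC : forall n Is, pairwise_disjoint Is -> jsq (x n) Is <= C ^+ 2.
  move=> n Is hIs.
  pose dn := fun m => if m == n then (1 : R) else 0.
  have ed : forall (y : nat -> rseq R), lincomb y dn n.+1 = y n.
    move=> y; apply: funext => k; rewrite /lincomb big_ord_recr /= /dn eqxx mul1r big1 ?add0r //.
    by move=> [m hm] _ /=; rewrite ifF ?mul0r //; apply/negbTE; rewrite neq_ltn hm.
  have [_ h2] := hequiv dn n.+1; rewrite !ed in h2.
  have hxJ : in_J (x n) by rewrite -ed; apply: lincomb_inJ hq hs.
  have he : jnorm (@unit_vec R n) <= 1.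
    apply: jnorm_le => // Js hJs; apply: le_trans (jsq_l1 (K := n.+1) _ hJs) _.
      by move=> k hk; rewrite /unit_vec ifF //; apply/negbTE; rewrite neq_ltn hk orbT.
    rewrite big_nat_recr //= big1_seq ?add0r; last first.
      by move=> k /andP [_]; rewrite mem_index_iota /unit_vec => hk; rewrite ifF ?normr0 //; apply/negbTE; rewrite neq_ltn; case/andP: hk => _ ->.
    by rewrite /unit_vec eqxx normr1 expr1n.
  have h3 : jnorm (x n) <= C by apply: le_trans h2 _; rewrite -[X in _ <= X]mulr1 ler_wpM2l //; apply: ltW.
  apply: le_trans (jsq_le_jnorm hxJ hIs) _.
  have h0 := jnorm_ge0 (x n).
  by rewrite expr2 [X in _ <= X]expr2; apply: ler_pM.
have hlow : forall a N, c * jnorm (lincomb (@unit_vec R) a N) <= jnorm (lincomb x a N).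
  by move=> a N; have [] := hequiv a N.
have hc2 : 0 < c ^+ 2 by apply: exprn_gt0.
have [N0 hN0] : exists N0, forall n, (N0 <= n)%N -> ~~ badp x q c n.
  apply: (eventually_good (B := 32 * C ^+ 2 / c ^+ 2)) => N.
  by rewrite ler_pdivlMr //; apply: bad_count hq hq0 hs hxC hc hlow.
have hdl : 0 < c / 2 by apply: divr_gt0.
have hgood0 : forall n, (N0 <= n)%N -> c / 2 <= `|sreg x q n|.
  by move=> n hn; have := hN0 n hn; rewrite /badp -leNgt.
have hj : forall n, exists jj, [&& (q n <= jj < q n.+1)%N,
    interval_sum (x n) (q n, jj) != 0 & (N0 <= n)%N ==> (jj == (q n.+1).-1)].
  move=> n; have hp0 : (0 < q n.+1)%N by have := hq n; lia.
  case: (leqP N0 n) => hn.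
    exists (q n.+1).-1; rewrite eqxx /= andbT; apply/andP; split.
      by have hqn := hq n; rewrite /= in hqn; apply/andP; split; lia.
    rewrite /interval_sum /= (prednK hp0) -normr_gt0.
    exact: lt_le_trans hdl (hgood0 n hn).
  exists (p n); rewrite hpq /= andbT.
  rewrite /interval_sum /= big_nat_recr /=; last by case/andP: (hpq n).
  rewrite big1_seq ?add0r //; move=> k /andP [_]; rewrite mem_index_iota => /andP [_ hk].
  exact: hp2.
pose j n := xchoose (hj n).
have hjP : forall n, [&& (q n <= j n < q n.+1)%N,
    interval_sum (x n) (q n, j n) != 0 & (N0 <= n)%N ==> (j n == (q n.+1).-1)].
  by move=> n; exact: xchooseP (hj n).
have hjr : forall n, (q n <= j n < q n.+1)%N by move=> n; case/and3P: (hjP n).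
have hchi : forall n, chi x q j n != 0 by move=> n; case/and3P: (hjP n).
have hgood : forall n, (N0 <= n)%N -> j n = (q n.+1).-1 /\ c / 2 <= `|sreg x q n|.
  move=> n hn; split; last exact: hgood0.
  by case/and3P: (hjP n) => _ _; rewrite hn /= => /eqP.
set Msq := (4 + 4 * (\sum_(n < N0) (`|sreg x q n / chi x q j n| + 1)) ^+ 2 +
   16 * C ^+ 2 * (1 / (c / 2) ^+ 2 + \sum_(n < N0) 1 / chi x q j n ^+ 2)).
have hMsq : 0 <= Msq.
  rewrite /Msq; apply: addr_ge0; first by apply: addr_ge0 => //; apply: mulr_ge0 => //; apply: sqr_ge0.
  apply: mulr_ge0; first by apply: mulr_ge0 => //; apply: sqr_ge0.
  apply: addr_ge0; first by apply: divr_ge0 => //; apply: sqr_ge0.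
  by apply: sumr_ge0 => n _; apply: divr_ge0 => //; apply: sqr_ge0.
pose P := fun (y : rseq R) k => lincomb x (acoef x q j y) k.+1 k.
have hqk : forall k, (k < q k.+1)%N by move=> k; have := q_ge hq k.+1; lia.
have hPl : forall y N k, (k < q N)%N -> P y k = lincomb x (acoef x q j y) N k.
  by move=> y N k hk; rewrite /P; apply: (lincomb_stable _ hq hs).
have hPb : forall y, in_J y -> forall Is, pairwise_disjoint Is -> jsq (P y) Is <= Msq * jnorm y ^+ 2.
  move=> y hy Is hIs; set N := (\max_(I <- Is) I.2).+1.
  rewrite (jsq_upto (v := lincomb x (acoef x q j y) N) _ (bigmax_bound Is)); last first.
    by move=> k hk; apply: hPl; have := q_ge hq N; lia.
  exact: main_bound hq hq0 hs hxC hjr hchi hdl hgood hy hIs.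
have hPJ : forall y, in_J y -> in_J (P y) by move=> y hy; exists (Msq * jnorm y ^+ 2); apply: hPb.
have hPlin : forall (al be : R) y z,
    P (fun k => al * y k + be * z k) = (fun k => al * P y k + be * P z k).
  move=> al be y z; apply: funext => k; rewrite /P /lincomb !mulr_sumr -big_split /=.
  apply: eq_bigr => n _; rewrite /acoef interval_sum_lin; ring.
have hPnorm : forall y, in_J y -> jnorm (P y) <= Num.sqrt Msq * jnorm y.
  move=> y hy; apply: jnorm_le.
    by apply: mulr_ge0; [apply: sqrtr_ge0 | apply: jnorm_ge0].
  by move=> Is hIs; rewrite exprMn sqr_sqrtr //; apply: hPb.
have hPL : forall b N, P (lincomb x b N) = lincomb x b N.
  move=> b N; apply: funext => k.
  have ha : forall n, acoef x q j (lincomb x b N) n = if (n < N)%N then b n else 0.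
    move=> n; rewrite /acoef.
    have -> : interval_sum (lincomb x b N) (q n, j n) =
        \sum_(m < N) b m * interval_sum (x m) (q n, j n).
      by rewrite /interval_sum /lincomb exchange_big /=; apply: eq_bigr => m _; rewrite mulr_sumr.
    case: ifP => hn.
      rewrite (bigD1 (Ordinal hn)) //= big1 ?addr0; last first.
        by move=> [m hm] /= hmn; rewrite (isum_x_other (j := j) hq hs hjr) ?mulr0.
      by change (b n * chi x q j n / chi x q j n = b n); rewrite mulrK // unitfE.
    rewrite big1 ?mul0r // => [[m hm]] _ /=; rewrite (isum_x_other (j := j) hq hs hjr) ?mulr0 //.
    by apply/eqP => e; subst; rewrite hm in hn.
  pose b' := fun n => if (n < N)%N then b n else 0.
  have e1 : P (lincomb x b N) k = lincomb x b' (maxn N k.+1) k.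
    have eb : acoef x q j (lincomb x b N) = b' by apply: funext => n; rewrite ha.
    rewrite /P eb.
    apply: (lincomb_stable b' hq hs) => //.
    by apply: leq_trans (hqk k) _; apply: q_le => //; apply: leq_maxr.
  rewrite e1 (lincomb_ext_zero (N := N)) ?leq_maxl //; last first.
    by move=> n /andP [hn _]; rewrite /b' ifF ?mul0r //; apply/negbTE; rewrite -leqNgt.
  by rewrite /lincomb; apply: eq_bigr => [[n hn]] _; rewrite /b' /= hn.
exists P; split; [exact: hPJ | split; [by move=> al be y z _ _; apply: hPlin | split]].
  by exists (Num.sqrt Msq).
split.
  move=> y hy; split; first exact: hPJ.
  move=> eps he.
  have he2 : 0 < (eps / 2) ^+ 2 by apply: exprn_gt0; apply: divr_gt0.
  have [K hK] := tail_small (hPJ y hy) he2.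
  exists (acoef x q j y), K.
  apply: le_lt_trans (_ : _ <= eps / 2) _; last first.
    by rewrite ltr_pdivrMr // ltr_pMr // ltr1n.
  apply: jnorm_le; first by apply: ltW; apply: divr_gt0.
  move=> Is hIs.
  have hKq : (K <= q K)%N by apply: q_ge.
  rewrite (jsq_ext (v := fun k => if (q K <= k)%N then P y k else 0)); first exact: hK.
  move=> k; case: ifP => hk.
    by rewrite (lincomb_beyond _ hq hs hk) subr0.
  by rewrite (hPl _ K) ?subrr //; rewrite ltnNge hk.
move=> y [hyJ hy]; apply: funext => k.
set t := (P y k - y k) ^+ 2.
have hA : 0 < 2 * Msq + 2 by have := hMsq; lra.
have ht : forall eps, 0 < eps -> t <= (2 * Msq + 2) * eps ^+ 2.
  move=> eps he; have [b [N hbN]] := hy eps he.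
  set L := lincomb x b N.
  set d := fun k => y k - L k.
  have hLJ : in_J L by apply: lincomb_inJ.
  have hdJ : in_J d.
    apply: (in_J_ext (u := fun k => 1 * y k + (-1) * L k)); last exact: in_J_lin.
    by move=> i; rewrite /d mul1r mulN1r.
  have ey : y = (fun k => 1 * d k + 1 * L k) by apply: funext => i; rewrite /d !mul1r subrK.
  have ePy : P y k - y k = P d k + (-1) * d k.
    have eyk : y k = d k + L k by rewrite /d subrK.
    rewrite {1}ey hPlin /= /L hPL -/L eyk !mul1r mulN1r; lra.
  have hd2 : jnorm d ^+ 2 <= eps ^+ 2.
    have h0 := jnorm_ge0 d.
    by rewrite expr2 [X in _ <= X]expr2; apply: ler_pM => //; apply: ltW.
  have := jsq_add (P d) (fun i => (-1) * d i) [:: (k, k)].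
  rewrite jsq_scale sqrrN expr1n mul1r !jsq_single /= -ePy -/t => h1.
  have h2 : P d k ^+ 2 <= Msq * jnorm d ^+ 2 by rewrite -jsq_single; apply: hPb => //; apply: pd_single.
  have h3 : d k ^+ 2 <= jnorm d ^+ 2 by rewrite -jsq_single; apply: jsq_le_jnorm => //; apply: pd_single.
  have h4 : Msq * jnorm d ^+ 2 <= Msq * eps ^+ 2 by apply: ler_wpM2l.
  lra.
have ht0 : 0 <= t by apply: sqr_ge0.
have htz : t = 0.
  apply/eqP; rewrite eq_le ht0 andbT; rewrite leNgt; apply/negP => htp.
  pose e := Num.sqrt (t / (2 * (2 * Msq + 2))).
  have hepos : 0 < e by rewrite sqrtr_gt0; apply: divr_gt0 => //; apply: mulr_gt0.
  have := ht e hepos; rewrite sqr_sqrtr; last by apply: divr_ge0 => //; apply: ltW; apply: mulr_gt0.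
  rewrite mulrC invfM mulrA divfK; last by apply: lt0r_neq0.
  lra.
by move: htz; rewrite /t => /eqP; rewrite sqrf_eq0 subr_eq0 => /eqP.
Qed.
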